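(* For all indices $\mathbf k$ and $\mathbf l$, $\zeta^{t,*}_{\mathrm{shift}}(\mathbf k*\mathbf l;T)=\zeta^{t,*}_{\mathrm{shift}}(\mathbf k;T)\,\zeta^{t,*}_{\mathrm{shift}}(\mathbf l;T)$ in $\mathbb R[T][[t]]$.
   Context: $t,T$ are commuting indeterminates. An index is a finite tuple $\mathbf{k}=(k_1,\dots,k_r)$ of positive integers ($r\ge0$), $\mathrm{dep}(\mathbf k)=r$, $\mathrm{wt}(\mathbf k)=\sum k_i$; $\oplus$ is componentwise sum of tuples of equal length and $b\binom{\mathbf{k}}{\mathbf{l}}=\prod_{i}\binom{k_i+l_i-1}{l_i}$. Admissible: empty or $k_r\ge2$; $\zeta(\mathbf k)=\sum_{0<n_1<\cdots<n_r}n_1^{-k_1}\cdots n_r^{-k_r}$. $\mathfrak H=\mathbb Q\langle e_0,e_1\rangle$, $\mathfrak H^1=\mathbb Q+e_1\mathfrak H$, $\mathfrak H^0=\mathbb Q+e_1\mathfrak He_0$, $e_{\mathbf{k}}=e_1e_0^{k_1-1}\cdots e_1e_0^{k_r-1}$. The harmonic product $*$ on $\mathfrak H^1$: bilinear, $1*w=w*1=w$, $we_{(k)}*w'e_{(l)}=(we_{(k)}*w')e_{(l)}+(w*w'e_{(l)})e_{(k)}-(w*w')e_{(k+l)}$. It is transported to formal $\mathbb Q$-linear combinations of indices via the linear bijection $\mathbf k\mapsto(-1)^{\mathrm{dep}(\mathbf k)}e_{\mathbf k}$, and maps on indices are extended linearly. $Z^*_T:\mathfrak H^1\to\mathbb R[T]$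 is the unique $\mathbb Q$-algebra homomorphism for $*$ with $Z^*_T(e_{\mathbf k})=(-1)^{\mathrm{dep}(\mathbf k)}\zeta(\mathbf k)$ for admissible $\mathbf k$ and $Z^*_T(e_1)=-T$; $\zeta^*(\mathbf k;T)=(-1)^{\mathrm{dep}(\mathbf k)}Z^*_T(e_{\mathbf k})$. $\zeta^{t,*}_{\mathrm{shift}}(\mathbf{k};T)=\sum_{\mathbf n\in\mathbb Z_{\ge0}^{\mathrm{dep}(\mathbf k)}}b\binom{\mathbf k}{\mathbf n}\zeta^{*}(\mathbf k\oplus\mathbf n;T)(-t)^{\mathrm{wt}(\mathbf n)}$. *)

(* Defs.v *)
From HB Require Import structures.
From mathcomp Require Import all_boot all_order all_algebra.
From mathcomp Require Import all_classical all_reals all_analysis.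
Set Implicit Arguments. Unset Strict Implicit. Unset Printing Implicit Defensive.
Import Order.TTheory GRing.Theory Num.Theory.
Import numFieldNormedType.Exports.
Local Open Scope ring_scope.

Definition is_index (k : seq nat) : bool := all (fun x => 0 < x)%N k.

Definition admissible (k : seq nat) : bool :=
  if k is [::] then true else (1 < last 0%N k)%N.

(* Truncated multiple zeta sum, on the REVERSED index:
   mzv_part [:: k_r; ...; k_1] N = sum_{0<n_1<...<n_r<N} n_1^-k_1 ... n_r^-k_r. *)
Fixpoint mzv_part {R : realType} (rk : seq nat) (N : nat) : R :=
  match rk with
  | [::] => 1
  | a :: rk' => \sum_(1 <= n < N) ((n%:R : R) ^- a) * mzv_part rk' n
  end.

Definition mzv {R : realType} (k : seq nat) : R :=
  limn (fun N => @mzv_part R (rev k) N).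

(* Harmonic (stuffle) product on indices, on REVERSED words, recursion on the
   last letters: (w a) * (w' b) = ((w a) * w') b + (w * (w' b)) a + (w * w') (a+b).
   The result is a list of indices, each with coefficient +1. *)
Fixpoint stuffle_rev (u v : seq nat) {struct u} : seq (seq nat) :=
  match u with
  | [::] => [:: v]
  | a :: u' =>
      let fix st_r (v : seq nat) : seq (seq nat) :=
        match v with
        | [::] => [:: u]
        | b :: v' =>
            map (cons b) (st_r v') ++ map (cons a) (stuffle_rev u' v)
              ++ map (cons (a + b)%N) (stuffle_rev u' v')
        end in
      st_r v
  end.

(* k * l as a formal sum of indices (the harmonic product transported from
   H^1 via k |-> (-1)^dep(k) e_k; all coefficients are +1). *)
Definition stuffle (k l : seq nat) : seq (seq nat) :=
  map rev (stuffle_rev (rev k) (rev l)).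

(* Zs is the harmonic-regularized MZV  k |-> zeta^*(k;T) in R[T]:
   the (unique) algebra homomorphism for * with zeta^*(k;T) = zeta(k) for
   admissible k and zeta^*(1;T) = T. *)
Definition is_zeta_star {R : realType} (Zs : seq nat -> {poly R}) : Prop :=
  [/\ Zs [::] = 1,
      Zs [:: 1%N] = 'X,
      (forall k, is_index k -> admissible k -> Zs k = (mzv k)%:P) &
      (forall k l, is_index k -> is_index l ->
         \sum_(m <- stuffle k l) Zs m = Zs k * Zs l)].

Fixpoint wcomps (r m : nat) : seq (seq nat) :=
  match r with
  | 0 => if m == 0%N then [:: [::]] else [::]
  | r'.+1 => flatten [seq map (cons i) (wcomps r' (m - i)) | i <- iota 0 m.+1]
  end.

Definition bcoef (k n : seq nat) : nat :=
  \prod_(p <- zip k n) 'C(p.1 + p.2 - 1, p.2).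

Definition oplus (k n : seq nat) : seq nat := [seq p.1 + p.2 | p <- zip k n]%N.

(* Elements of R[T][[t]] are represented by their coefficient sequences
   nat -> {poly R}. The coefficient of t^m in zeta^{t,*}_shift(k;T). *)
Definition zeta_shift {R : realType} (Zs : seq nat -> {poly R}) (k : seq nat)
    (m : nat) : {poly R} :=
  (-1) ^+ m * \sum_(n <- wcomps (size k) m) (bcoef k n)%:R * Zs (oplus k n).

Definition zeta_shift_lin {R : realType} (Zs : seq nat -> {poly R})
    (s : seq (seq nat)) (m : nat) : {poly R} :=
  \sum_(k <- s) zeta_shift Zs k m.

Definition ps_mul {R : realType} (f g : nat -> {poly R}) (m : nat) : {poly R} :=
  \sum_(i < m.+1) f i * g (m - i)%N.

(* Main.v *)
Require Import Defs.
From HB Require Import structures.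
From mathcomp Require Import all_boot all_order all_algebra.
From mathcomp Require Import all_classical all_reals all_analysis.
From Stdlib Require Import Lia.
From mathcomp Require Import zify.
Import GRing.Theory Num.Theory.
Local Open Scope ring_scope.



Definition DD {V : nmodType} (m : nat) (f : nat -> nat -> V) : V :=
  \sum_(i < m.+1) f i (m - i)%N.

Lemma DD_ext {V : nmodType} m (f g : nat -> nat -> V) :
  (forall i j, (i + j = m)%N -> f i j = g i j) -> DD m f = DD m g.
Proof.
move=> H; apply: eq_bigr => i _; apply: H.
have := ltn_ord i; lia.
Qed.

Lemma DD_add {V : nmodType} m (f g : nat -> nat -> V) :
  DD m (fun i j => f i j + g i j) = DD m f + DD m g.
Proof. by rewrite /DD big_split. Qed.

Lemma DD_sum {V : nmodType} {I : Type} (r : seq I) (P : pred I) m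
   (f : I -> nat -> nat -> V) :
  DD m (fun i j => \sum_(x <- r | P x) f x i j) = \sum_(x <- r | P x) DD m (f x).
Proof. by rewrite /DD exchange_big. Qed.

Lemma DD_mulrn {V : nmodType} m (f : nat -> nat -> V) c :
  DD m (fun i j => f i j *+ c) = DD m f *+ c.
Proof. by rewrite /DD sumrMnl. Qed.

Lemma DD_rev {V : nmodType} m (f : nat -> nat -> V) :
  DD m f = DD m (fun i j => f j i).
Proof.
rewrite /DD (reindex_inj rev_ord_inj) /=; apply: eq_bigr => i _.
have := ltn_ord i => hi.
by rewrite subSS (_ : (m - (m - i) = i)%N) //; lia.
Qed.

Lemma sum_if_eq {V : nmodType} n (g : nat -> V) c m :
  \sum_(k < n) (if (c + k == m)%N then g (val k) else 0) =
  if ((c <= m) && (m - c < n))%N then g (m - c)%N else 0.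
Proof.
case: ifP => H.
- have hk : (m - c < n)%N by case/andP: H.
  rewrite (bigD1 (Ordinal hk)) //= ifT; last by apply/eqP; case/andP: H => h1 _; lia.
  rewrite big1 ?addr0 // => k /eqP hk'; rewrite ifF //; apply/negbTE/eqP => E.
  by apply: hk'; apply: val_inj => /=; lia.
- rewrite big1 // => k _; rewrite ifF //; apply/negbTE/eqP => E.
  move/negbT: H; rewrite negb_and -!ltnNge => /orP [] h; have := ltn_ord k; lia.
Qed.

Lemma DD3 {V : nmodType} m (h : nat -> nat -> nat -> V) :
  DD m (fun i r => DD r (fun j k => h i j k)) =
  \sum_(i < m.+1) \sum_(j < m.+1) \sum_(k < m.+1)
     (if (i + j + k == m)%N then h i j k else 0).
Proof.
apply: eq_bigr => i _; have hi := ltn_ord i.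
under [RHS]eq_bigr => j _ do rewrite (sum_if_eq _ (fun k => h i j k)).
rewrite /DD (big_ord_widen _ (fun j => h i j (m - i - j)%N) (_ : (m - i).+1 <= m.+1)%N); last lia.
rewrite big_mkcond /=; apply: eq_bigr => j _.
case: ifP => H1; case: ifP => H2 //.
- by congr h; lia.
- move/negbT: H2; rewrite negb_and -!ltnNge; lia.
- case/andP: H2 => H2 H3. move/negbT: H1; rewrite -ltnNge; lia.
Qed.

Lemma DD_swap {V : nmodType} m (h : nat -> nat -> nat -> V) :
  DD m (fun i r => DD r (fun j k => h i j k)) =
  DD m (fun j r => DD r (fun i k => h i j k)).
Proof.
rewrite !DD3 exchange_big /=; apply: eq_bigr => j _; apply: eq_bigr => i _.
by rewrite (addnC j i).
Qed.

Lemma DD_assoc {V : nmodType} m (h : nat -> nat -> nat -> V) :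
  DD m (fun i r => DD i (fun s i' => h s i' r)) =
  DD m (fun s n => DD n (fun i' k => h s i' k)).
Proof.
rewrite DD_rev /= DD3 DD3.
rewrite exchange_big /=; apply: eq_bigr => s _.
rewrite exchange_big /=; apply: eq_bigr => i _.
apply: eq_bigr => r _; congr (if _ then _ else _); apply/eqP/eqP; lia.
Qed.



Definition cb (a j : nat) : nat := 'C(a + j - 1, j).

Lemma addE (x y : nat) : (x + y)%R = (x + y)%N. Proof. by []. Qed.
Lemma mulE (x y : nat) : (x * y)%R = (x * y)%N. Proof. by []. Qed.

Lemma cb0n j : cb 0 j = (j == 0)%N.
Proof. case: j => [|j] //; rewrite /cb bin_small //; lia. Qed.

Lemma cbn0 a : cb a 0 = 1%N.
Proof. by rewrite /cb bin0. Qed.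

Lemma hockey a n : cb a.+1 n = \sum_(t < n.+1) cb a t.
Proof.
elim: n => [|n IH]; first by rewrite big_ord1 !cbn0.
rewrite big_ord_recr /= -IH addE /cb.
rewrite (_ : (a.+1 + n.+1 - 1 = (a + n).+1)%N); last lia.
rewrite binS addnC; congr (_ + _)%N.
- by congr binomial; lia.
- by congr binomial; lia.
Qed.

Lemma vander a b n : cb (a + b) n = DD n (fun s j => cb a s * cb b j).
Proof.
elim: b n => [|b IH] n.
  rewrite addn0 /DD big_ord_recr /= subnn. rewrite cb0n mulE muln1 big1 ?addE ?add0n //.
  move=> i _; rewrite cb0n (_ : (n - i == 0)%N = false) ?mulE ?muln0 //; apply/negbTE; have := ltn_ord i; lia.
rewrite addnS hockey.
transitivity (DD n (fun t k => DD t (fun s j => cb a s * cb b j))).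
  by apply: eq_bigr => t _; rewrite IH.
rewrite DD_assoc; apply: eq_bigr => s _.
by rewrite hockey mulr_sumr.
Qed.



Fixpoint shr {V : nmodType} (F : seq nat -> V) (u : seq nat) {struct u} : nat -> V :=
  fun m =>
  match u with
  | [::] => if (m == 0)%N then F [::] else 0
  | a :: u' => DD m (fun j n => shr (fun w => F ((a + j)%N :: w)) u' n *+ cb a j)
  end.

Lemma shr_cons {V : nmodType} (F : seq nat -> V) a u m :
  shr F (a :: u) m = DD m (fun j n => shr (fun w => F ((a + j)%N :: w)) u n *+ cb a j).
Proof. by []. Qed.

Lemma shr_nil {V : nmodType} (F : seq nat -> V) m :
  shr F [::] m = if (m == 0)%N then F [::] else 0.
Proof. by []. Qed.

Definition pos (w : seq nat) : bool := all (fun x => 0 < x)%N w.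

Lemma shr_ext_in {V : nmodType} (F G : seq nat -> V) u m :
  (forall w, pos w -> F w = G w) -> pos u -> shr F u m = shr G u m.
Proof.
elim: u F G m => [|a u IH] F G m H /=; first by move=> _; rewrite H.
case/andP=> ha hu; apply: DD_ext => j n _; congr (_ *+ _).
apply: IH => // w hw; apply: H => /=; rewrite hw andbT; lia.
Qed.

Lemma shr_ext {V : nmodType} (F G : seq nat -> V) u m :
  (forall w, F w = G w) -> shr F u m = shr G u m.
Proof. by move=> H; congr shr; apply: boolp.funext. Qed.

Lemma shr0 {V : nmodType} u m : shr (fun _ => 0 : V) u m = 0.
Proof.
elim: u m => [|a u IH] m /=; first by case: ifP.
by rewrite /DD big1 // => j _; rewrite IH mul0rn.
Qed.

Lemma shr_add {V : nmodType} (F G : seq nat -> V) u m :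
  shr (fun w => F w + G w) u m = shr F u m + shr G u m.
Proof.
elim: u F G m => [|a u IH] F G m /=; first by case: ifP; rewrite ?addr0.
rewrite -DD_add; apply: DD_ext => j n _; by rewrite IH mulrnDl.
Qed.

Lemma shr_sum {V : nmodType} {I : Type} (r : seq I) (P : pred I)
   (f : I -> seq nat -> V) u m :
  shr (fun w => \sum_(x <- r | P x) f x w) u m = \sum_(x <- r | P x) shr (f x) u m.
Proof.
elim: r => [|x r IH].
  rewrite big_nil; transitivity (shr (fun _ => 0 : V) u m); last exact: shr0.
  by apply: shr_ext => w; rewrite big_nil.
rewrite big_cons -IH; case Px: (P x).
- by rewrite -shr_add; apply: shr_ext => w; rewrite big_cons Px.
- by apply: shr_ext => w; rewrite big_cons Px.
Qed.

Lemma shr_mulrn {V : nmodType} (F : seq nat -> V) c u m :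
  shr (fun w => F w *+ c) u m = shr F u m *+ c.
Proof.
elim: c => [|c IH].
  rewrite mulr0n; transitivity (shr (fun _ => 0 : V) u m); last exact: shr0.
  by apply: shr_ext => w.
by rewrite mulrS -IH -shr_add; apply: shr_ext => w; rewrite mulrS.
Qed.

Lemma shr_DD {V : nmodType} (g : seq nat -> nat -> nat -> V) r u m :
  shr (fun w => DD r (fun j k => g w j k)) u m = DD r (fun j k => shr (fun w => g w j k) u m).
Proof. by rewrite /DD shr_sum. Qed.

Lemma shr_if {V : nmodType} (F : seq nat -> V) (b : bool) u m :
  shr (fun w => if b then F w else 0) u m = if b then shr F u m else 0.
Proof. by case: b; rewrite ?shr0. Qed.

Lemma shr_mull {V : pzRingType} (F : seq nat -> V) c u m :
  shr (fun w => c * F w) u m = c * shr F u m.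
Proof.
elim: u F m => [|a u IH] F m /=; first by case: ifP; rewrite ?mulr0.
rewrite /DD mulr_sumr; apply: eq_bigr => j _; by rewrite IH mulrnAr.
Qed.

Lemma shr_mulr {V : pzRingType} (F : seq nat -> V) c u m :
  shr (fun w => F w * c) u m = shr F u m * c.
Proof.
elim: u F m => [|a u IH] F m /=; first by case: ifP; rewrite ?mul0r.
rewrite /DD mulr_suml; apply: eq_bigr => j _; by rewrite IH mulrnAl.
Qed.

Lemma shr_rcons {V : nmodType} (F : seq nat -> V) u a m :
  shr F (rcons u a) m =
  DD m (fun j n => shr (fun w => F (rcons w (a + j)%N)) u n *+ cb a j).
Proof.
elim: u F m => [|b u IH] F m //=.
transitivity (DD m (fun i r => DD r (fun j k =>
   shr (fun w => F ((b + i)%N :: rcons w (a + j)%N)) u k *+ cb a j) *+ cb b i)).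
  by apply: DD_ext => i r _; rewrite IH.
rewrite (@DD_ext _ m _ (fun i r => DD r (fun j k =>
   shr (fun w => F ((b + i)%N :: rcons w (a + j)%N)) u k *+ cb a j *+ cb b i))); last first.
  by move=> i r _; rewrite -DD_mulrn.
rewrite DD_swap; apply: DD_ext => j n _.
by rewrite -DD_mulrn; apply: DD_ext => i k _; rewrite -!mulrnA mulnC.
Qed.

Lemma shr_rev {V : nmodType} (F : seq nat -> V) k m :
  shr F k m = shr (fun w => F (rev w)) (rev k) m.
Proof.
elim: k F m => [|a k IH] F m //=.
rewrite rev_cons shr_rcons; apply: DD_ext => j n _; rewrite IH; congr (_ *+ _).
by apply: shr_ext => w; rewrite rev_rcons.
Qed.

Lemma shr_wcomps {V : pzRingType} (F : seq nat -> V) k m :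
  \sum_(n <- wcomps (size k) m) (bcoef k n)%:R * F (oplus k n) = shr F k m.
Proof.
elim: k F m => [|a k IH] F m.
  by case: m => [|m] /=; rewrite ?big_nil // big_cons big_nil addr0 /bcoef /= big_nil mul1r.
rewrite (_ : wcomps (size (a::k)) m = flatten [seq map (cons i) (wcomps (size k) (m - i)) | i <- iota 0 m.+1]) //.
rewrite big_flatten big_map shr_cons /DD.
rewrite -[iota 0 m.+1]/(index_iota 0 m.+1) big_mkord.
apply: eq_bigr => j _.
rewrite big_map -IH -sumrMnl; apply: eq_bigr => n _.
rewrite /bcoef /= big_cons natrM /= -mulrA mulr_natl /cb; congr (_ *+ _).
Qed.



Definition ST {V : nmodType} (F : seq nat -> V) (u v : seq nat) : V :=
  \sum_(w <- stuffle_rev u v) F w.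

Lemma st_nil_r u : stuffle_rev u [::] = [:: u].
Proof. by case: u. Qed.

Lemma st_cons a u b v : stuffle_rev (a :: u) (b :: v) =
  map (cons b) (stuffle_rev (a :: u) v) ++ map (cons a) (stuffle_rev u (b :: v))
  ++ map (cons (a + b)%N) (stuffle_rev u v).
Proof. by []. Qed.

Lemma ST_nil_l {V : nmodType} (F : seq nat -> V) v : ST F [::] v = F v.
Proof. by rewrite /ST /= big_seq1. Qed.

Lemma ST_nil_r {V : nmodType} (F : seq nat -> V) u : ST F u [::] = F u.
Proof. by rewrite /ST st_nil_r big_seq1. Qed.

Lemma ST_cons {V : nmodType} (F : seq nat -> V) a u b v :
  ST F (a :: u) (b :: v) = ST (fun w => F (b :: w)) (a :: u) v +
    (ST (fun w => F (a :: w)) u (b :: v) + ST (fun w => F ((a + b)%N :: w)) u v).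
Proof. by rewrite /ST st_cons !big_cat !big_map. Qed.

Lemma DD_exch {V : nmodType} i r (X : nat -> nat -> nat -> nat -> V) :
  DD i (fun s i' => DD r (fun j k => X s i' j k)) = DD r (fun j k => DD i (fun s i' => X s i' j k)).
Proof. by rewrite /DD exchange_big. Qed.

Lemma DD_last {V : nmodType} m (g : nat -> V) :
  DD m (fun i r => if (r == 0)%N then g i else 0) = g m.
Proof.
rewrite /DD big_ord_recr /= subnn eqxx big1 ?add0r // => i _.
by rewrite ifF //; apply/negbTE; have := ltn_ord i; lia.
Qed.

Lemma DD_first {V : nmodType} m (g : nat -> V) :
  DD m (fun i r => if (i == 0)%N then g r else 0) = g m.
Proof. by rewrite DD_rev DD_last. Qed.



Lemma mainC {V : nmodType} u v (F : seq nat -> V) m :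
  \sum_(w <- stuffle_rev u v) shr F w m =
  DD m (fun i r => shr (fun x => shr (fun y => ST F x y) v r) u i).
Proof.
elim: u v F m => [|a u IHu] v F m.
  rewrite /= big_seq1.
  transitivity (DD m (fun i r => if (i == 0)%N then shr (fun y => ST F [::] y) v r else 0)).
    by rewrite DD_first; apply: shr_ext => y; rewrite ST_nil_l.
  by apply: DD_ext => i r _.
elim: v F m => [|b v IHv] F m.
  rewrite /= big_seq1.
  transitivity (DD m (fun i r => if (r == 0)%N then shr (fun x => ST F x [::]) (a :: u) i else 0)).
    by rewrite DD_last; apply: shr_ext => x; rewrite ST_nil_r.
  apply: DD_ext => i r _.
  rewrite -(shr_if (fun x => ST F x [::])).
  by [].
rewrite (st_cons a u b v) !big_cat !big_map.
have E1 : \sum_(w <- stuffle_rev (a :: u) v) shr F (b :: w) m =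
  DD m (fun j n => DD n (fun i k => shr (fun x => shr (fun y =>
     ST (fun w => F ((b + j)%N :: w)) x y) v k) (a :: u) i) *+ cb b j).
  under eq_bigr => w _ do rewrite shr_cons.
  rewrite -DD_sum; apply: DD_ext => j n _; by rewrite sumrMnl IHv.
have E2 : \sum_(w <- stuffle_rev u (b :: v)) shr F (a :: w) m =
  DD m (fun s n => DD n (fun i k => shr (fun x => shr (fun y =>
     ST (fun w => F ((a + s)%N :: w)) x y) (b :: v) k) u i) *+ cb a s).
  under eq_bigr => w _ do rewrite shr_cons.
  rewrite -DD_sum; apply: DD_ext => j n _; by rewrite sumrMnl IHu.
have E3 : \sum_(w <- stuffle_rev u v) shr F ((a + b)%N :: w) m =
  DD m (fun s n => DD n (fun i k => shr (fun x => shr (fun y =>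
     ST (fun w => F ((a + b + s)%N :: w)) x y) v k) u i) *+ cb (a + b) s).
  under eq_bigr => w _ do rewrite shr_cons.
  rewrite -DD_sum; apply: DD_ext => j n _; by rewrite sumrMnl IHu.
rewrite E1 E2 E3.
pose P1 s x' r := DD r (fun j k => shr (fun y' => ST (fun w => F ((b + j)%N :: w)) ((a + s)%N :: x') y') v k *+ cb b j).
pose P2 s x' r := shr (fun y => ST (fun w => F ((a + s)%N :: w)) x' y) (b :: v) r.
pose P3 s x' r := DD r (fun j k => shr (fun y' => ST (fun w => F ((a + s + (b + j))%N :: w)) x' y') v k *+ cb b j).
transitivity (DD m (fun i r => DD i (fun s i' => shr (fun x' => P1 s x' r) u i' *+ cb a s)) +
  (DD m (fun i r => DD i (fun s i' => shr (fun x' => P2 s x' r) u i' *+ cb a s)) +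
   DD m (fun i r => DD i (fun s i' => shr (fun x' => P3 s x' r) u i' *+ cb a s)))); last first.
  rewrite -!DD_add; apply: DD_ext => i r _; rewrite shr_cons -!DD_add.
  apply: DD_ext => s i' _; rewrite -!mulrnDl -!shr_add; congr (_ *+ _).
  apply: shr_ext => x'; rewrite shr_cons /P1 /P2 /P3 shr_cons -!DD_add.
  apply: DD_ext => j k _; rewrite -!mulrnDl -!shr_add; congr (_ *+ _).
  by apply: shr_ext => y'; rewrite ST_cons.
congr (_ + (_ + _)).
-
  rewrite (@DD_ext _ m _ (fun j n => DD n (fun i k => shr (fun x => shr (fun y => ST (fun w => F ((b + j)%N :: w)) x y) v k) (a :: u) i *+ cb b j))); last by move=> j n _; rewrite DD_mulrn.
  rewrite DD_swap; apply: DD_ext => i r _.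
  transitivity (DD r (fun j k => DD i (fun s i' => shr (fun x' => shr (fun y' => ST (fun w => F ((b + j)%N :: w)) ((a + s)%N :: x') y') v k) u i' *+ cb a s *+ cb b j))).
    by apply: DD_ext => j k _; rewrite shr_cons -DD_mulrn.
  apply: esym.
  transitivity (DD i (fun s i' => DD r (fun j k => shr (fun x' => shr (fun y' => ST (fun w => F ((b + j)%N :: w)) ((a + s)%N :: x') y') v k) u i' *+ cb a s *+ cb b j))); last exact: DD_exch.
  apply: DD_ext => s i' _; rewrite /P1 shr_DD -DD_mulrn; apply: DD_ext => j k _.
  by rewrite shr_mulrn mulrnAC.
-
  rewrite [RHS]DD_assoc; apply: DD_ext => s n _; by rewrite -DD_mulrn.
-
  pose Phi n i k := shr (fun x => shr (fun y => ST (fun w => F ((a + b + n)%N :: w)) x y) v k) u i.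
  apply: esym.
  transitivity (DD m (fun i r => DD i (fun s i' => DD r (fun j k => Phi (s + j)%N i' k *+ (cb a s * cb b j)%N)))).
    apply: DD_ext => i r _; apply: DD_ext => s i' _.
    rewrite /P3 shr_DD -DD_mulrn; apply: DD_ext => j k _.
    rewrite shr_mulrn mulrnA mulrnAC /Phi; congr (_ *+ _ *+ _).
    rewrite (_ : (a + b + (s + j) = a + s + (b + j))%N) //; lia.
  rewrite DD_assoc.
  transitivity (DD m (fun s n => DD n (fun j k' => DD k' (fun i' k => Phi (s + j)%N i' k *+ (cb a s * cb b j)%N)))).
    by apply: DD_ext => s n _; rewrite DD_swap.
  transitivity (DD m (fun p r => DD p (fun s j => DD r (fun i' k => Phi (s + j)%N i' k *+ (cb a s * cb b j)%N)))).
    by rewrite DD_assoc.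
  apply: DD_ext => p r _.
  transitivity (DD p (fun s j => DD r (fun i' k => Phi p i' k *+ (cb a s * cb b j)%N))).
    by apply: DD_ext => s j hsj; rewrite hsj.
  rewrite DD_exch -DD_mulrn; apply: DD_ext => i' k _.
  rewrite vander /DD sumrMnr; congr (_ *+ _); apply: eq_bigr => s _; by rewrite mulE.
Qed.



Theorem corollary2p5 (R : realType) (Zs : seq nat -> {poly R}) :
  is_zeta_star Zs ->
  forall k l : seq nat, is_index k -> is_index l ->
  forall m : nat,
    zeta_shift_lin Zs (stuffle k l) m = ps_mul (zeta_shift Zs k) (zeta_shift Zs l) m.
Proof.
case=> _ _ _ Hmul k l hk hl m.
have zsE w n : zeta_shift Zs w n = (-1) ^+ n * shr Zs w n.
  by rewrite /zeta_shift shr_wcomps.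
have pk : pos (rev k) by rewrite /pos all_rev.
have pl : pos (rev l) by rewrite /pos all_rev.
rewrite /zeta_shift_lin /stuffle big_map.
under eq_bigr => w _ do rewrite zsE shr_rev revK.
rewrite -mulr_sumr mainC.
transitivity ((-1) ^+ m * DD m (fun i r => shr Zs k i * shr Zs l r)).
  congr (_ * _); apply: DD_ext => i r _.
  transitivity (shr (fun x => Zs (rev x) * shr Zs l r) (rev k) i).
    apply: shr_ext_in => // x px.
    transitivity (shr (fun y => Zs (rev x) * Zs (rev y)) (rev l) r).
      apply: shr_ext_in => // y py.
      rewrite -Hmul; last by rewrite /is_index all_rev.
        by rewrite /ST /stuffle !revK big_map.
      by rewrite /is_index all_rev.
    by rewrite shr_mull -shr_rev.
  by rewrite shr_mulr -shr_rev.
rewrite /ps_mul /DD mulr_sumr; apply: eq_bigr => i _.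
rewrite !zsE.
have -> : (-1) ^+ m = (-1) ^+ i * (-1) ^+ (m - i) :> {poly R}.
  by rewrite -exprD subnKC //; have := ltn_ord i; lia.
by rewrite -!mulrA; congr (_ * _); rewrite mulrCA.
Qed.
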